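(* Let $\kappa:G\to[1,\infty)$ and suppose $G$ is $\kappa$-decaying with decay constant $C$. Let $\psi:G\to\mathbb{C}$ satisfy $K:=\|\psi\kappa\|_\infty<\infty$. Then for every normalized 2-cocycle $\sigma$, $\psi\in MCF(G,\sigma)$ and $\|M_\psi\|\le CK$ (operator norm of $M_\psi$ on $C^*_r(G,\sigma)$).
   Context: $\sigma:G\times G\to\mathbb{T}$ is a normalized 2-cocycle ($\sigma(g,h)\sigma(gh,k)=\sigma(h,k)\sigma(g,hk)$, $\sigma(g,e)=\sigma(e,g)=1$); $\Lambda_\sigma(g)$ is the unitary on $\ell^2(G)$ with $(\Lambda_\sigma(g)\xi)(h)=\sigma(g,g^{-1}h)\xi(g^{-1}h)$, $\lambda=\Lambda_1$; $C^*_r(G,\sigma)$ is the operator-norm closure of $\mathrm{span}\,\Lambda_\sigma(G)$. $\mathcal{K}(G)$ = finitely supported functions; $\pi_\lambda(f)=\sum_g f(g)\lambda(g)$. For $\kappa:G\to[1,\infty)$, $\|\xi\|_{2,\kappa}=\|\xi\kappa\|_2$; $G$ is $\kappa$-decaying if $f\mapsto\pi_\lambda(f)$ is bounded from $(\mathcal{K}(G),\|\cdot\|_{2,\kappa})$ to $C^*_r(G,1)$ with operator norm, and the norm of this map is the $\kappa$-decay constant. For $x\in C^*_r(G,\sigma)$, $\widehat x=x\delta_e$. For $\varphi:G\to\mathbb{C}$, $M_\varphi$ is the linear map on $\mathrm{span}\,\Lambda_\sigma(G)$ with $M_\varphi(\Lambda_\sigma(g))=\varphi(g)\Lambda_\sigma(g)$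 (extended to $C^*_r(G,\sigma)$ when bounded). $MCF(G,\sigma)$ is the set of $\varphi$ such that $\sum_g\varphi(g)\widehat x(g)\Lambda_\sigma(g)$ converges in operator norm (as a net of finite partial sums) for every $x\in C^*_r(G,\sigma)$. *)

(* Defs.v *)
From HB Require Import structures.
From mathcomp Require Import all_boot all_order all_algebra.
From mathcomp Require Import all_classical all_reals all_analysis.
From mathcomp Require Import complex.
Set Implicit Arguments. Unset Strict Implicit. Unset Printing Implicit Defensive.
Import Order.TTheory GRing.Theory Num.Theory.
Local Open Scope classical_set_scope.
Local Open Scope ring_scope.

Section TwistedGroupAlgebra.
Variables (R : realType) (G : groupType).

Local Notation C := (R[i]).
Definition cabs (z : C) : R := Normc.normc z.

(* (Possibly unbounded / partially defined) operators on C^G; only their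
   behaviour on l^2(G) matters. *)
Definition op := (G -> C) -> (G -> C).

(* ||xi||_2 in the extended reals (+oo when xi is not in l^2(G)). *)
Definition l2norm (xi : G -> C) : \bar R :=
  sqrte (\esum_(g in [set: G]) ((cabs (xi g)) ^+ 2)%:E).

Definition opnorm (T : op) : \bar R :=
  ereal_sup [set l2norm (T xi) | xi in [set xi | (l2norm xi <= 1)%E]].

Definition opsub (T S : op) : op := fun xi h => T xi h - S xi h.

Definition normalized_2cocycle (sigma : G -> G -> C) : Prop :=
  [/\ (forall g h, cabs (sigma g h) = 1),
      (forall g h k, sigma g h * sigma (g * h)%g k = sigma h k * sigma g (h * k)%g),
      (forall g, sigma g 1%g = 1) & (forall g, sigma 1%g g = 1)].

Definition Lambda (sigma : G -> G -> C) (g : G) : op :=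
  fun xi h => sigma g (g^-1 * h)%g * xi (g^-1 * h)%g.

Definition finsupp (f : G -> C) : Prop := finite_set [set g | f g != 0].

Definition pi_sigma (sigma : G -> G -> C) (f : G -> C) : op :=
  fun xi h => \sum_(g \in [set g | f g != 0]) f g * Lambda sigma g xi h.

Definition trivial_cocycle : G -> G -> C := fun _ _ => 1.
Definition pi_lambda (f : G -> C) : op := pi_sigma trivial_cocycle f.

Definition l2k (kappa : G -> R) (f : G -> C) : \bar R :=
  l2norm (fun g => f g * ((kappa g)%:C)%C).

Definition kappa_decaying (kappa : G -> R) : Prop :=
  exists M : R, forall f, finsupp f ->
    (opnorm (pi_lambda f) <= M%:E * l2k kappa f)%E.

Definition decay_constant (kappa : G -> R) : \bar R :=
  ereal_sup [set opnorm (pi_lambda f) |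
             f in [set f | finsupp f /\ (l2k kappa f <= 1)%E]].

Definition in_Cr (sigma : G -> G -> C) (x : op) : Prop :=
  forall eps : R, 0 < eps -> exists f, finsupp f /\
    (opnorm (opsub x (pi_sigma sigma f)) <= eps%:E)%E.

Definition delta_e : G -> C := fun h => if h == 1%g then 1 else 0.

Definition xhat (x : op) : G -> C := x delta_e.

Definition Mpartial (sigma : G -> G -> C) (phi : G -> C) (x : op)
    (F : set G) : op :=
  fun xi h => \sum_(g \in F) phi g * xhat x g * Lambda sigma g xi h.

Definition MCF (sigma : G -> G -> C) (phi : G -> C) : Prop :=
  forall x, in_Cr sigma x -> exists y : op,
    forall eps : R, 0 < eps -> exists F0 : set G, finite_set F0 /\
      forall F : set G, finite_set F -> F0 `<=` F ->
        (opnorm (opsub y (Mpartial sigma phi x F)) <= eps%:E)%E.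

End TwistedGroupAlgebra.

(* Main.v *)
Set Warnings "-all".
Require Import Defs.
From HB Require Import structures.
From mathcomp Require Import all_boot all_order all_algebra.
From mathcomp Require Import all_classical all_reals all_analysis.
From mathcomp Require Import complex.
From mathcomp Require Import lra ring.
Import Order.TTheory GRing.Theory Num.Theory.
Import numFieldNormedType.Exports.
Local Open Scope classical_set_scope.
Local Open Scope ring_scope.
Section Aux.
Variables (R : realType) (G : groupType).
Local Notation CC := (R[i]).

Definition sq (z : CC) : R := cabs z ^+ 2.

Lemma normE (z : CC) : `|z| = ((cabs z)%:C)%C.
Proof. by []. Qed.

Lemma cabs_ge0 (z : CC) : 0 <= cabs z.
Proof. by case: z => a b; rewrite /cabs /=; apply: sqrtr_ge0. Qed.

Lemma sq_ge0 z : 0 <= sq z.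
Proof. by rewrite /sq exprn_ge0 // cabs_ge0. Qed.

Lemma cabsM (z w : CC) : cabs (z * w) = cabs z * cabs w.
Proof. exact: Normc.normcM. Qed.

Lemma cabs_real (r : R) : cabs (r%:C)%C = `|r|.
Proof. by rewrite /cabs /= expr0n /= addr0 sqrtr_sqr. Qed.

Lemma cabs_le (z w : CC) : (cabs z <= cabs w) = (`|z| <= `|w|).
Proof. by rewrite !normE lecR. Qed.

Lemma sqE (z : CC) : sq z = complex.Re z ^+ 2 + complex.Im z ^+ 2.
Proof. by case: z => a b; rewrite /sq /cabs /= sqr_sqrtr // addr_ge0 // sqr_ge0. Qed.

Lemma l2norm_le (v : G -> CC) (b : R) : 0 <= b ->
  (l2norm v <= b%:E)%E <->
  (forall X, finite_set X -> \sum_(h \in X) sq (v h) <= b ^+ 2).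
Proof.
move=> b0.
have -> : (b%:E = sqrte (b ^+ 2)%:E)%E.
  by rewrite /= sqrtr_sqr ger0_norm.
rewrite /l2norm lee_sqrt ?lee_fin ?sqr_ge0 //; split.
- move=> H X finX; rewrite -lee_fin -fsumEFin //.
  apply: le_trans H; apply: ereal_sup_ubound; exists X => //.
- move=> H; apply: ge_ereal_sup => _ [X [finX _] <-].
  by rewrite fsumEFin // lee_fin; apply: H.
Qed.

Lemma opnorm_le (T : op R G) (b : R) : 0 <= b ->
  (forall xi, (forall X, finite_set X -> \sum_(h \in X) sq (xi h) <= 1) ->
     forall X, finite_set X -> \sum_(h \in X) sq (T xi h) <= b ^+ 2) ->
  (opnorm T <= b%:E)%E.
Proof.
move=> b0 H; apply: ge_ereal_sup => _ [xi /= xi1 <-].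
apply/l2norm_le => //; apply: H.
by move/(l2norm_le xi (1:R) ler01) : xi1; rewrite expr1n.
Qed.

Lemma opnorm_ge (T : op R G) xi : (l2norm xi <= 1)%E ->
  (l2norm (T xi) <= opnorm T)%E.
Proof. by move=> H; apply: ereal_sup_ubound; exists xi. Qed.

Lemma opnorm_leP (T : op R G) (b : R) xi : 0 <= b -> (opnorm T <= b%:E)%E ->
  (forall X, finite_set X -> \sum_(h \in X) sq (xi h) <= 1) ->
  forall X, finite_set X -> \sum_(h \in X) sq (T xi h) <= b ^+ 2.
Proof.
move=> b0 Hn Hxi; apply/l2norm_le => //; apply: le_trans Hn.
apply: opnorm_ge; have := (l2norm_le xi (1:R) ler01).2; rewrite expr1n; apply.
exact: Hxi.
Qed.


Definition Qop (sigma : G -> G -> CC) (c : G -> CC) : op R G :=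
  fun xi h => \sum_(g \in [set: G]) c g * Lambda sigma g xi h.

Definition S2 (v : G -> CC) : R := \sum_(g \in [set: G]) sq (v g).

Lemma sq0 : sq 0 = 0.
Proof. by rewrite /sq /cabs /= expr0n /= addr0 sqrtr0 expr0n. Qed.

Lemma sq_eq0 z : sq z = 0 -> z = 0.
Proof.
rewrite /sq => /eqP; rewrite sqrf_eq0 => /eqP; exact: Normc.eq0_normc.
Qed.

Lemma pi_sigmaE sigma f : pi_sigma sigma f = Qop sigma f.
Proof.
apply/funext => xi; apply/funext => h; rewrite /pi_sigma /Qop.
apply: fsbig_widen => // g [_ /=]; rewrite /preimage /= => /negP; rewrite negbK.
by move/eqP ->; rewrite mul0r.
Qed.

Lemma MpartialE sigma phi x F : Mpartial sigma phi x F =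
  Qop sigma (fun g => if g \in F then phi g * xhat x g else 0).
Proof.
apply/funext => xi; apply/funext => h; rewrite /Mpartial /Qop fsbig_mkcond.
by apply: eq_fsbigr => g _; rewrite /patch; case: ifP => //; rewrite mul0r.
Qed.

Lemma Qop_fin sigma c (A : set G) xi h : finite_set A ->
  (forall g, ~ A g -> c g = 0) ->
  Qop sigma c xi h = \sum_(g <- finmap.enum_fset (fset_set A)) c g * Lambda sigma g xi h.
Proof.
move=> finA cA; rewrite /Qop -(fsbig_widen A) ?fsbig_finite //.
by move=> g [_ /cA]; rewrite /preimage /= => ->; rewrite mul0r.
Qed.

Lemma fsum_sub (A B : set G) (f : G -> R) : A `<=` B -> finite_set B ->
  (forall g, B g -> 0 <= f g) -> \sum_(g \in A) f g <= \sum_(g \in B) f g.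
Proof.
move=> AB finB f0; rewrite [X in _ <= X](fsbigID A) //.
rewrite setIidr // lerDl; apply: fsumr_ge0 => g [Bg _]; exact: f0.
Qed.

Lemma sq_supp (v : G -> CC) (X : set G) :
  \sum_(h \in X) sq (v h) = \sum_(h \in X `&` [set g | v g != 0]) sq (v h).
Proof.
apply/esym/fsbig_widen; first by move=> g [].
move=> g [Xg /not_andP [//|]] /=; rewrite /preimage /= => /negP; rewrite negbK.
by move/eqP ->; rewrite sq0.
Qed.

Lemma fsum_le_S2 (v : G -> CC) (X : set G) : finsupp v ->
  \sum_(h \in X) sq (v h) <= S2 v.
Proof.
move=> fv; rewrite /S2 (sq_supp v X) (sq_supp v setT) setTI.
apply: fsum_sub; first by move=> g [].
  exact: fv.
by move=> g _; exact: sq_ge0.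
Qed.

Lemma S2_fin (v : G -> CC) : finsupp v ->
  S2 v = \sum_(g <- finmap.enum_fset (fset_set [set g | v g != 0])) sq (v g).
Proof. by move=> fv; rewrite /S2 sq_supp setTI fsbig_finite. Qed.

Lemma S2_ge0 v : 0 <= S2 v.
Proof. by apply: fsumr_ge0 => g _; exact: sq_ge0. Qed.

Lemma sq_le_S2 (v : G -> CC) g : finsupp v -> sq (v g) <= S2 v.
Proof.
move=> fv; have := fsum_le_S2 v [set g] fv; by rewrite fsbig_set1.
Qed.

Lemma S2_le (u v : G -> CC) (k : R) : finsupp v ->
  (forall g, sq (u g) <= k * sq (v g)) -> S2 u <= k * S2 v.
Proof.
move=> fv uv.
have u0 g : v g = 0 -> u g = 0.
  move=> vg; apply: sq_eq0; apply/le_anti; rewrite sq_ge0 andbT.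
  by have := uv g; rewrite vg sq0 mulr0.
rewrite (S2_fin v fv) /S2 -(fsbig_widen [set g | v g != 0] setT) //; last first.
  move=> g [_ /=] /negP; rewrite negbK => /eqP /u0 ->.
  by rewrite /preimage /= sq0.
rewrite fsbig_finite // mulr_sumr; apply: ler_sum => g _; exact: uv.
Qed.

Lemma fsum_le (X : set G) (f1 f2 : G -> R) : finite_set X ->
  (forall g, f1 g <= f2 g) -> \sum_(g \in X) f1 g <= \sum_(g \in X) f2 g.
Proof.
by move=> finX H; rewrite !fsbig_finite //; apply: ler_sum => g _; exact: H.
Qed.

Lemma sq_real_mul (k : R) (z : CC) : sq ((k%:C)%C * z) = k ^+ 2 * sq z.
Proof. by rewrite /sq cabsM cabs_real exprMn real_normK // num_real. Qed.

Lemma sq_mul (z w : CC) : sq (z * w) = sq z * sq w.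
Proof. by rewrite /sq cabsM exprMn. Qed.

Lemma sq_le (z w : CC) : `|z| <= `|w| -> sq z <= sq w.
Proof.
rewrite -cabs_le => H; rewrite /sq ler_sqr // ?nnegrE ?cabs_ge0 //.
Qed.

Lemma sq_of_real (r : R) : sq ((r%:C)%C) = r ^+ 2.
Proof. by rewrite /sq cabs_real real_normK // num_real. Qed.


Lemma l2norm0_le1 : (l2norm (fun _ : G => (0:CC)%R) <= 1)%E.
Proof.
apply/(l2norm_le _ (1:R) ler01) => X _.
by rewrite fsbig1 // => g _; rewrite sq0.
Qed.

Lemma opnorm_ge0 (T : op R G) : (0 <= opnorm T)%E.
Proof.
have H := opnorm_ge T _ l2norm0_le1.
apply: le_trans H; rewrite /l2norm; exact: sqrte_ge0.
Qed.

Lemma cabs0 : cabs (0:CC) = 0.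
Proof. exact: Normc.normc0. Qed.

Lemma finsupp_sub (u v : G -> CC) : finsupp v -> (forall g, v g = 0 -> u g = 0) ->
  finsupp u.
Proof.
move=> fv uv; apply: sub_finite_set fv => g /=; apply: contra => /eqP /uv ->.
by [].
Qed.

Lemma decay_bound (kappa : G -> R) (C : R) :
  (forall g, 1 <= kappa g) -> decay_constant kappa = C%:E ->
  forall F, finsupp F -> forall xi,
  (forall X, finite_set X -> \sum_(h \in X) sq (xi h) <= 1) ->
  forall X, finite_set X ->
  \sum_(h \in X) sq (pi_lambda F xi h) <=
     C ^+ 2 * S2 (fun g => F g * ((kappa g)%:C)%C).
Proof.
move=> hk hC F fF xi hxi X finX.
have k0 g : ((kappa g)%:C)%C != 0 :> CC.
  by rewrite -(rmorph0 (real_complex R)) (inj_eq (@complexI R)) gt_eqF // (lt_le_trans ltr01).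
have fFk : finsupp (fun g => F g * ((kappa g)%:C)%C).
  by apply: (finsupp_sub _ _ fF) => g ->; rewrite mul0r.
set s := S2 _.
have [s0|spos] : s = 0 \/ 0 < s.
  have := S2_ge0 (fun g => F g * ((kappa g)%:C)%C); rewrite -/s le_eqVlt.
  by case/orP => [/eqP <-|]; [left|right].
- have F0 g : F g = 0.
    have := sq_le_S2 _ g fFk; rewrite -/s s0 => H.
    have /sq_eq0 /eqP : sq (F g * ((kappa g)%:C)%C) = 0.
      by apply/le_anti; rewrite H sq_ge0.
    by rewrite mulf_eq0 (negbTE (k0 g)) orbF => /eqP.
  rewrite s0 mulr0 fsbig1 // => h _.
  rewrite /pi_lambda pi_sigmaE /Qop fsbig1 ?sq0 // => g _.
  by rewrite F0 mul0r.
- set t := Num.sqrt s.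
  have tpos : 0 < t by rewrite sqrtr_gt0.
  have t2 : t ^+ 2 = s by rewrite sqr_sqrtr // ltW.
  set F' := fun g => F g * ((t^-1)%:C)%C.
  have fF' : finsupp F' by apply: (finsupp_sub _ _ fF) => g; rewrite /F' => ->; rewrite mul0r.
  have nF' : (opnorm (pi_lambda F') <= C%:E)%E.
    rewrite -hC; apply: ereal_sup_ubound; exists F' => //; split => //.
    apply/(l2norm_le _ (1:R) ler01) => Y finY.
    have -> : \sum_(h \in Y) sq (F' h * ((kappa h)%:C)%C) =
              (t^-1) ^+ 2 * \sum_(h \in Y) sq (F h * ((kappa h)%:C)%C).
      rewrite mulr_fsumr; apply: eq_fsbigr => g _.
      by rewrite /F' -mulrA [_ * ((kappa g)%:C)%C]mulrC mulrA sq_mul sq_of_real mulrC.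
    rewrite expr1n -[X in _ <= X](@mulVf _ (t ^+ 2)); last by rewrite gt_eqF // exprn_gt0.
    rewrite exprVn ler_wpM2l //; first by rewrite invr_ge0 exprn_ge0 // ltW.
    rewrite t2; exact: fsum_le_S2.
  have C0 : 0 <= C by rewrite -lee_fin; apply: le_trans nF'; exact: opnorm_ge0.
  have H := opnorm_leP _ _ _ C0 nF' hxi X finX.
  have -> : \sum_(h \in X) sq (pi_lambda F xi h) =
            t ^+ 2 * \sum_(h \in X) sq (pi_lambda F' xi h).
    rewrite mulr_fsumr; apply: eq_fsbigr => h _; rewrite -sq_real_mul.
    congr sq; rewrite /pi_lambda !pi_sigmaE /Qop mulr_fsumr.
    apply: eq_fsbigr => g _; rewrite /F'; set L := Lambda _ g xi h.
    clearbody L; rewrite mulrA mulrA [_ * F g]mulrC.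
    by rewrite -(mulrA (F g)) -rmorphM /= divff ?gt_eqF // rmorph1 mulr1.
  by rewrite t2 mulrC ler_wpM2r // ltW.
Qed.


Definition bnd (xi : G -> CC) :=
  forall X, finite_set X -> \sum_(h \in X) sq (xi h) <= 1.

Lemma Qop_dom (sigma : G -> G -> CC) (hs : forall g h, cabs (sigma g h) = 1)
  (c : G -> CC) (xi : G -> CC) h : finsupp c ->
  sq (Qop sigma c xi h) <=
  sq (pi_lambda (fun g => ((cabs (c g))%:C)%C) (fun g => ((cabs (xi g))%:C)%C) h).
Proof.
move=> fc; rewrite /pi_lambda pi_sigmaE.
have cA g : ~ [set g | c g != 0] g -> c g = 0.
  by move=> /negP; rewrite negbK => /eqP.
rewrite (Qop_fin _ _ _ _ _ fc cA) (Qop_fin _ _ _ _ _ fc); last first.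
  by move=> g /cA ->; rewrite cabs0.
apply: sq_le.
set P := (X in _ <= `|X|).
have P0 : 0 <= P.
  apply: sumr_ge0 => g _; rewrite /Lambda /trivial_cocycle /= mul1r.
  by apply: mulr_ge0; rewrite ler0c cabs_ge0.
rewrite [X in _ <= X]ger0_norm //.
apply: le_trans (ler_norm_sum _ _ _) _; apply: ler_sum => g _.
rewrite /Lambda /trivial_cocycle /= mul1r !normrM !normE hs.
by rewrite rmorph1 mul1r.
Qed.

Lemma core_bound (kappa : G -> R) (C : R) :
  (forall g, 1 <= kappa g) -> decay_constant kappa = C%:E ->
  forall (sigma : G -> G -> CC), (forall g h, cabs (sigma g h) = 1) ->
  forall c, finsupp c -> forall xi, bnd xi ->
  forall X, finite_set X ->
  \sum_(h \in X) sq (Qop sigma c xi h) <=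
     C ^+ 2 * S2 (fun g => c g * ((kappa g)%:C)%C).
Proof.
move=> hk hC sigma hs c fc xi hxi X finX.
set F := fun g => ((cabs (c g))%:C)%C.
set xi' := fun g => ((cabs (xi g))%:C)%C.
have fF : finsupp F.
  by apply: (finsupp_sub _ _ fc) => g; rewrite /F => ->; rewrite cabs0.
have hxi' : bnd xi'.
  move=> Y finY; apply: le_trans (hxi Y finY); rewrite le_eqVlt; apply/orP; left.
  by apply/eqP; apply: eq_fsbigr => g _; rewrite /xi' sq_of_real.
have := decay_bound kappa C hk hC F fF xi' hxi' X finX.
have -> : S2 (fun g => F g * ((kappa g)%:C)%C) = S2 (fun g => c g * ((kappa g)%:C)%C).
  by apply: eq_fsbigr => g _; rewrite !sq_mul /F sq_of_real.
apply: le_trans; apply: fsum_le => // h.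
exact: Qop_dom.
Qed.

Lemma sq1 : sq 1 = 1.
Proof. by rewrite /sq /cabs Normc.normc1 expr1n. Qed.

Lemma delta_bnd : bnd (@delta_e R G).
Proof.
move=> X finX.
have fd : finsupp (@delta_e R G).
  apply: (sub_finite_set _ (finite_set1 (1%g : G))) => g /=.
  by rewrite /delta_e; case: ifP => [/eqP -> //|]; rewrite eqxx.
apply: le_trans (fsum_le_S2 _ X fd) _.
rewrite /S2 -(fsbig_widen [set 1%g] setT) // ?fsbig_set1.
  by rewrite /delta_e eqxx sq1.
move=> g [_ /= /eqP g1]; rewrite /preimage /= /delta_e.
case: ifP => [/eqP e|_]; first by rewrite e eqxx in g1.
by rewrite sq0.
Qed.

Lemma pi_delta (sigma : G -> G -> CC) (hs1 : forall g, sigma g 1%g = 1) f :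
  pi_sigma sigma f (@delta_e R G) = f.
Proof.
apply/funext => h; rewrite pi_sigmaE /Qop -(fsbig_widen [set h] setT) //.
  by rewrite fsbig_set1 /Lambda mulVg /delta_e eqxx hs1 !mulr1.
move=> g [_ /= /eqP gh]; rewrite /preimage /= /Lambda /delta_e.
case: ifP; last by rewrite !mulr0.
move=> /eqP e; move: gh; rewrite -{1}(mulVKg g h) e mulg1.
by rewrite eqxx.
Qed.

Lemma l2norm_S2 (f : G -> CC) : finsupp f ->
  ((Num.sqrt (S2 f))%:E <= l2norm f)%E.
Proof.
move=> ff; rewrite /l2norm.
have -> : ((Num.sqrt (S2 f))%:E = sqrte (S2 f)%:E)%E by [].
rewrite lee_sqrt; last by apply: esum_ge0 => g _; rewrite lee_fin; exact: sq_ge0.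
apply: esum_ge; exists [set g | f g != 0]; first by split.
rewrite fsumEFin // lee_fin /S2 sq_supp (sq_supp f [set g | f g != 0]) setTI setIid.
by [].
Qed.

Lemma C_ge0 (kappa : G -> R) (C : R) : decay_constant kappa = C%:E -> 0 <= C.
Proof.
move=> hC; rewrite -lee_fin -hC.
apply: le_trans (opnorm_ge0 (pi_lambda (fun _ => 0%R))) _.
apply: ereal_sup_ubound; exists (fun _ => 0%R) => //; split.
  rewrite /finsupp; apply: (@sub_finite_set _ _ set0) => // g /=; by rewrite eqxx.
apply/(l2norm_le _ (1:R) ler01) => Y finY.
by rewrite fsbig1 // => g _; rewrite mul0r sq0.
Qed.


Lemma K_facts (psi : G -> CC) (kappa : G -> R) (K : R) :
  (forall g, 1 <= kappa g) ->
  ereal_sup [set ((cabs (psi g)) * kappa g)%:E | g in [set: G]] = K%:E ->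
  (forall g, cabs (psi g) * kappa g <= K) /\ 0 <= K.
Proof.
move=> hk hK.
have H g : cabs (psi g) * kappa g <= K.
  by rewrite -lee_fin -hK; apply: ereal_sup_ubound; exists g.
split => //; apply: le_trans (H 1%g).
by apply: mulr_ge0; [exact: cabs_ge0 | apply: le_trans (hk 1%g)].
Qed.

Lemma psi_bound (kappa : G -> R) (C : R) (psi : G -> CC) (K : R) :
  (forall g, 1 <= kappa g) -> decay_constant kappa = C%:E ->
  ereal_sup [set ((cabs (psi g)) * kappa g)%:E | g in [set: G]] = K%:E ->
  forall (sigma : G -> G -> CC), (forall g h, cabs (sigma g h) = 1) ->
  forall c, finsupp c -> forall xi, bnd xi ->
  forall X, finite_set X ->
  \sum_(h \in X) sq (Qop sigma (fun g => psi g * c g) xi h) <=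
     (C * K) ^+ 2 * S2 c.
Proof.
move=> hk hC hK sigma hs c fc xi hxi X finX.
have [HK K0] := K_facts psi kappa K hk hK.
have fpc : finsupp (fun g => psi g * c g).
  by apply: (finsupp_sub _ _ fc) => g ->; rewrite mulr0.
apply: le_trans (core_bound kappa C hk hC sigma hs _ fpc xi hxi X finX) _.
rewrite [(C * K) ^+ 2]exprMn -[C ^+ 2 * K ^+ 2 * _]mulrA ler_wpM2l ?exprn_ge0 ?(C_ge0 kappa C hC) //.
apply: S2_le => // g.
rewrite !sq_mul sq_of_real mulrAC [sq (psi g) * _]mulrC /sq -exprMn mulrC.
rewrite [X in X <= _]mulrC; apply: ler_wpM2r; first by rewrite exprn_ge0 // cabs_ge0.
rewrite ler_sqr ?nnegrE //; last by apply: mulr_ge0; [apply: le_trans (hk g)|exact: cabs_ge0].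
by rewrite mulrC.
Qed.

Lemma conj2 (kappa : G -> R) (C : R) (psi : G -> CC) (K : R) :
  (forall g, 1 <= kappa g) -> decay_constant kappa = C%:E ->
  ereal_sup [set ((cabs (psi g)) * kappa g)%:E | g in [set: G]] = K%:E ->
  forall sigma : G -> G -> CC, normalized_2cocycle sigma ->
  forall f : G -> CC, finsupp f ->
     (opnorm (pi_sigma sigma (fun g => (psi g * f g)%R))
          <= (C * K)%:E * opnorm (pi_sigma sigma f))%E.
Proof.
move=> hk hC hK sigma [hs _ hs1 _] f ff.
have [_ K0] := K_facts psi kappa K hk hK.
have C0 := C_ge0 kappa C hC.
have CK0 : 0 <= C * K by apply: mulr_ge0.
apply: (@le_trans _ _ ((C * K * Num.sqrt (S2 f))%:E)).
  apply: opnorm_le; first by apply: mulr_ge0 => //; exact: sqrtr_ge0.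
  move=> xi hxi X finX; rewrite pi_sigmaE.
  apply: le_trans (psi_bound kappa C psi K hk hC hK sigma hs f ff xi hxi X finX) _.
  by rewrite [(C * K * _) ^+ 2]exprMn sqr_sqrtr // S2_ge0.
rewrite EFinM; apply: lee_wpmul2l; first by rewrite lee_fin.
apply: le_trans (l2norm_S2 f ff) _.
rewrite -{1}(pi_delta sigma hs1 f); apply: opnorm_ge.
by apply/(l2norm_le _ (1:R) ler01); rewrite expr1n; exact: delta_bnd.
Qed.


Lemma ReD (u v : CC) : complex.Re (u + v) = complex.Re u + complex.Re v.
Proof. by case: u; case: v. Qed.
Lemma ImD (u v : CC) : complex.Im (u + v) = complex.Im u + complex.Im v.
Proof. by case: u; case: v. Qed.
Lemma ReB (u v : CC) : complex.Re (u - v) = complex.Re u - complex.Re v.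
Proof. by case: u; case: v. Qed.
Lemma ImB (u v : CC) : complex.Im (u - v) = complex.Im u - complex.Im v.
Proof. by case: u; case: v. Qed.

Lemma sq_add_le (u v : CC) : sq (u + v) <= 2 * sq u + 2 * sq v.
Proof.
rewrite !sqE ReD ImD.
have := sqr_ge0 (complex.Re u - complex.Re v).
have := sqr_ge0 (complex.Im u - complex.Im v).
nra.
Qed.

Lemma sqN (u : CC) : sq (- u) = sq u.
Proof. by case: u => a b; rewrite !sqE /= !sqrrN. Qed.

Lemma sqB_Re (u v : CC) : (complex.Re u - complex.Re v) ^+ 2 <= sq (u - v).
Proof. by rewrite sqE ReB lerDl sqr_ge0. Qed.

Lemma sqB_Im (u v : CC) : (complex.Im u - complex.Im v) ^+ 2 <= sq (u - v).
Proof. by rewrite sqE ImB lerDr sqr_ge0. Qed.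

Lemma e_pos n : 0 < (n.+1%:R : R)^-1.
Proof. by rewrite invr_gt0 ltr0n. Qed.

Lemma e_mono n m : (n <= m)%N -> (m.+1%:R : R)^-1 <= (n.+1%:R)^-1.
Proof. by move=> nm; rewrite lef_pV2 ?posrE ?ltr0n // ler_nat ltnS. Qed.

Lemma arch (c d : R) : 0 <= c -> 0 < d ->
  exists N, forall n, (N <= n)%N -> c * (n.+1%:R)^-1 < d.
Proof.
move=> c0 d0; exists (Num.Def.trunc (c / d)) => n Nn.
have H := truncnS_gt (c / d).
have : (c / d) < n.+1%:R.
  by apply: lt_le_trans H _; rewrite ler_nat ltnS.
by rewrite ltr_pdivrMr // => H'; rewrite ltr_pdivrMr ?ltr0n // mulrC.
Qed.

Fixpoint Uacc (S : nat -> set G) (n : nat) : set G :=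
  match n with 0 => S 0%N | m.+1 => Uacc S m `|` S m.+1 end.

Lemma Uacc_fin S : (forall n, finite_set (S n)) -> forall n, finite_set (Uacc S n).
Proof. by move=> fS; elim => [|n IH] //=; rewrite finite_setU; split. Qed.

Lemma Uacc_sub S n : S n `<=` Uacc S n.
Proof. by case: n => [|n] //= g Sg; right. Qed.

Lemma Uacc_mono S n m : (n <= m)%N -> Uacc S n `<=` Uacc S m.
Proof.
elim: m => [|m IH]; first by rewrite leqn0 => /eqP ->.
rewrite leq_eqVlt => /orP [/eqP -> //|]; rewrite ltnS => /IH H g /H Hg /=.
by left.
Qed.

Lemma memF (A : set G) g : ~ A g -> (g \in A) = false.
Proof. by move=> H; apply/negP => /set_mem. Qed.

Lemma Mpartial_diff sigma (psi : G -> CC) x (F1 F2 : set G) xi h :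
  finite_set F1 -> finite_set F2 ->
  Mpartial sigma psi x F1 xi h - Mpartial sigma psi x F2 xi h =
  Qop sigma (fun g => psi g * ((if g \in F1 then xhat x g else 0) -
                               (if g \in F2 then xhat x g else 0))) xi h.
Proof.
move=> f1 f2; have f12 : finite_set (F1 `|` F2) by rewrite finite_setU.
have out g : ~ (F1 `|` F2) g -> (g \in F1) = false /\ (g \in F2) = false.
  by move=> H; split; apply: memF => H'; apply: H; [left|right].
rewrite !MpartialE !(Qop_fin _ _ (F1 `|` F2)) //;
  try by move=> g /out [e1 e2]; rewrite ?e1 ?e2 ?subrr ?mulr0.
rewrite -sumrB; apply: eq_bigr => g _.
by case: ifP => _; case: ifP => _; ring.
Qed.


Lemma KE (kappa : G -> R) (C : R) (psi : G -> CC) (K : R) :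
  (forall g, 1 <= kappa g) -> decay_constant kappa = C%:E ->
  ereal_sup [set ((cabs (psi g)) * kappa g)%:E | g in [set: G]] = K%:E ->
  forall (sigma : G -> G -> CC), (forall g h, cabs (sigma g h) = 1) ->
  forall (a : G -> CC) (U : set G) (eps : R),
  (forall Z, finite_set Z -> (forall g, Z g -> ~ U g) ->
     \sum_(g \in Z) sq (a g) <= eps) ->
  forall F1 F2 : set G, finite_set F1 -> finite_set F2 ->
  U `<=` F1 -> U `<=` F2 ->
  forall xi, bnd xi -> forall X, finite_set X ->
  \sum_(h \in X) sq (Qop sigma (fun g => psi g * ((if g \in F1 then a g else 0) -
                               (if g \in F2 then a g else 0))) xi h)
    <= (C * K) ^+ 2 * eps.
Proof.
move=> hk hC hK sigma hs a U eps tail F1 F2 f1 f2 UF1 UF2 xi hxi X finX.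
set c := fun g => (if g \in F1 then a g else 0) - (if g \in F2 then a g else 0).
have f12 : finite_set (F1 `|` F2) by rewrite finite_setU.
have out g : ~ (F1 `|` F2) g -> (g \in F1) = false /\ (g \in F2) = false.
  by move=> H; split; apply: memF => H'; apply: H; [left|right].
have c0 g : ~ ((F1 `|` F2) `\` U) g -> c g = 0.
  move=> H; rewrite /c; case: (pselect (U g)) => Ug.
    by rewrite !mem_set ?subrr //; [apply: UF2|apply: UF1].
  have : ~ (F1 `|` F2) g by move=> H'; apply: H; split.
  by move=> /out [-> ->]; rewrite subrr.
have fc : finsupp c.
  apply: (sub_finite_set _ (finite_setD U f12)) => g /= cg.
  case: (pselect (((F1 `|` F2) `\` U) g)) => // H.
  by rewrite (c0 g H) eqxx in cg.
apply: le_trans (psi_bound kappa C psi K hk hC hK sigma hs c fc xi hxi X finX) _.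
rewrite ler_wpM2l ?sqr_ge0 //.
have finZ : finite_set ((F1 `|` F2) `\` U) by exact: finite_setD.
rewrite /S2 -(fsbig_widen ((F1 `|` F2) `\` U) setT) //; last first.
  by move=> g [_ /c0]; rewrite /preimage /= => ->; rewrite sq0.
have disj : forall g, ((F1 `|` F2) `\` U) g -> ~ U g by move=> g [].
apply: le_trans (tail _ finZ disj).
apply: fsum_le => // g; rewrite /c.
by case: ifP => _; case: ifP => _; rewrite ?subrr ?subr0 ?sub0r ?sqN ?sq0 ?sq_ge0.
Qed.


Lemma lra_aux (sS sZ M e : R) : sS + sZ <= M -> M - e < sS -> sZ <= e.
Proof. move=> h1 h2; lra. Qed.

Lemma mcf (kappa : G -> R) (C : R) (psi : G -> CC) (K : R) :
  (forall g, 1 <= kappa g) -> decay_constant kappa = C%:E ->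
  ereal_sup [set ((cabs (psi g)) * kappa g)%:E | g in [set: G]] = K%:E ->
  forall sigma : G -> G -> CC, normalized_2cocycle sigma -> MCF sigma psi.
Proof.
move=> hk hC hK sigma [hs _ hs1 _] x hx.
have [_ K0] := K_facts psi kappa K hk hK.
have C0 := C_ge0 kappa C hC.
set a := xhat x.
have [B HB] : exists B, forall X, finite_set X -> \sum_(h \in X) sq (a h) <= B.
  have [f [ff hf]] := hx 1 ltr01.
  exists (2 + 2 * S2 f) => X finX.
  have H1 := opnorm_leP _ _ (@delta_e R G) ler01 hf delta_bnd X finX.
  have e h : opsub x (pi_sigma sigma f) (@delta_e R G) h = a h - f h.
    by rewrite /opsub (pi_delta sigma hs1 f).
  apply: le_trans (fsum_le X _ (fun h => 2 * sq (a h - f h) + 2 * sq (f h)) finX _) _.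
    by move=> h; have := sq_add_le (a h - f h) (f h); rewrite subrK.
  rewrite fsbig_split // -!mulr_fsumr.
  have h1 : \sum_(i \in X) sq (a i - f i) <= 1.
    by move: H1; rewrite expr1n; under eq_fsbigr do rewrite e.
  have h2 : \sum_(i \in X) sq (f i) <= S2 f by exact: fsum_le_S2.
  set s1 := \sum_(i \in X) sq (a i - f i) in h1 *.
  set s2 := \sum_(i \in X) sq (f i) in h2 *.
  change (2 * s1 + 2 * s2 <= 2 + 2 * S2 f); lra.
set E := [set s : R | exists2 X, finite_set X & s = \sum_(h \in X) sq (a h)].
have hE : has_sup E.
  split; first by exists 0; exists set0 => //; rewrite fsbig_set0.
  by exists B => s [X fX ->]; exact: HB.
set Ssup := sup E.
have Sup_ub X : finite_set X -> \sum_(h \in X) sq (a h) <= Ssup.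
  by move=> fX; apply: (ub_le_sup hE.2); exists X.
have Sexists n : exists S, finite_set S /\
    Ssup - (n.+1%:R)^-1 < \sum_(h \in S) sq (a h).
  have [s [X fX ->] Hs] := sup_adherent (e_pos n) hE.
  by exists X.
case: (choice Sexists) => S HS.
have fS n : finite_set (S n) by case: (HS n).
have tail n Z : finite_set Z -> (forall g, Z g -> ~ S n g) ->
    \sum_(g \in Z) sq (a g) <= (n.+1%:R)^-1.
  move=> fZ dZ.
  have fSZ : finite_set (S n `|` Z) by rewrite finite_setU; split.
  have h1 := Sup_ub (S n `|` Z) fSZ.
  rewrite fsbigU // in h1; last by move=> g [Sg Zg]; exfalso; exact: dZ g Zg Sg.
  have h2 := (HS n).2.
  set sS := \sum_(h \in S n) sq (a h) in h1 h2.
  set sZ := \sum_(h \in Z) sq (a h) in h1 *.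
  have h1' : sS + sZ <= Ssup by exact: h1.
  exact: lra_aux h1' h2.
set U := Uacc S.
have fU n : finite_set (U n) by exact: Uacc_fin.
have tailU n Z : finite_set Z -> (forall g, Z g -> ~ U n g) ->
    \sum_(g \in Z) sq (a g) <= (n.+1%:R)^-1.
  move=> fZ dZ; apply: (tail n Z fZ) => g Zg Sg.
  by apply: (dZ g Zg); exact: (Uacc_sub S n g Sg).
have KEn n F1 F2 : finite_set F1 -> finite_set F2 -> U n `<=` F1 -> U n `<=` F2 ->
  forall xi, bnd xi -> forall X, finite_set X ->
  \sum_(h \in X) sq (Mpartial sigma psi x F1 xi h - Mpartial sigma psi x F2 xi h)
    <= (C * K) ^+ 2 * (n.+1%:R)^-1.
  move=> f1 f2 s1 s2 xi hxi X finX.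
  under eq_fsbigr do rewrite Mpartial_diff //.
  exact: (KE kappa C psi K hk hC hK sigma hs a (U n) _ (tailU n) F1 F2 f1 f2 s1 s2 xi hxi X finX).
set T := fun m => Mpartial sigma psi x (U m).
have sqlt (d eps : R) : 0 < eps -> d ^+ 2 < eps ^+ 2 -> `|d| < eps.
  move=> e0 H; rewrite -ltr_sqr ?nnegrE ?normr_ge0 ?ltW // real_normK //.
  exact: num_real.
have cvRe xi (hxi : bnd xi) h : cvg ((fun m => complex.Re (T m xi h)) @ \oo).
  apply: cauchy_cvg; apply: cauchy_exP => eps eps0.
  have [N HN] := arch ((C * K) ^+ 2) (eps ^+ 2) (sqr_ge0 _) (exprn_gt0 2 eps0).
  exists (complex.Re (T N xi h)); exists N => // m /= Nm.
  rewrite /ball /=; apply: sqlt => //.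
  have := KEn N (U N) (U m) (fU N) (fU m) (@subset_refl _ _) (Uacc_mono S N m Nm)
    xi hxi [set h] (finite_set1 h).
  rewrite fsbig_set1 => H.
  apply: le_lt_trans (sqB_Re (T N xi h) (T m xi h)) _.
  exact: le_lt_trans H (HN N (leqnn N)).
have cvIm xi (hxi : bnd xi) h : cvg ((fun m => complex.Im (T m xi h)) @ \oo).
  apply: cauchy_cvg; apply: cauchy_exP => eps eps0.
  have [N HN] := arch ((C * K) ^+ 2) (eps ^+ 2) (sqr_ge0 _) (exprn_gt0 2 eps0).
  exists (complex.Im (T N xi h)); exists N => // m /= Nm.
  rewrite /ball /=; apply: sqlt => //.
  have := KEn N (U N) (U m) (fU N) (fU m) (@subset_refl _ _) (Uacc_mono S N m Nm)
    xi hxi [set h] (finite_set1 h).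
  rewrite fsbig_set1 => H.
  apply: le_lt_trans (sqB_Im (T N xi h) (T m xi h)) _.
  exact: le_lt_trans H (HN N (leqnn N)).
pose y : op R G := fun xi h =>
  ((lim ((fun m => complex.Re (T m xi h)) @ \oo)) +i*
   (lim ((fun m => complex.Im (T m xi h)) @ \oo)))%C.
exists y => eps eps0.
have [N HN] := arch ((C * K) ^+ 2) (eps ^+ 2) (sqr_ge0 _) (exprn_gt0 2 eps0).
exists (U N); split => // F fF UF.
apply: opnorm_le; first exact: ltW.
move=> xi hxi X finX; rewrite /opsub.
have Hm m : (N <= m)%N -> \sum_(h \in X) sq (T m xi h - Mpartial sigma psi x F xi h)
    <= eps ^+ 2.
  move=> Nm; apply: le_trans (KEn N (U m) F (fU m) fF (Uacc_mono S N m Nm) UF xi hxi X finX) _.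
  exact: ltW (HN N (leqnn N)).
set M := Mpartial sigma psi x F.
have cv : (fun m => \sum_(h \in X) sq (T m xi h - M xi h)) @ \oo -->
          \sum_(h \in X) sq (y xi h - M xi h).
  rewrite fsbig_finite //.
  under eq_cvg do rewrite fsbig_finite //.
  apply: (@cvg_big _ _ +%R 0 xpredT add_continuous) => // h _.
  rewrite sqE ReB ImB !expr2.
  under eq_cvg do rewrite sqE ReB ImB !expr2.
  apply: cvgD; apply: cvgM; apply: cvgB; try exact: cvg_cst.
  - exact: cvRe.
  - exact: cvRe.
  - exact: cvIm.
  - exact: cvIm.
apply: (cvgr_to_le cv); exists N => // m /= Nm; exact: Hm.
Qed.

End Aux.

Theorem proposition4p8 (R : realType) (G : groupType)
  (kappa : G -> R) (C : R) (psi : G -> R[i]) (K : R) :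
  (forall g, 1 <= kappa g) ->
  kappa_decaying kappa ->
  decay_constant kappa = C%:E ->
  ereal_sup [set ((cabs (psi g)) * kappa g)%:E | g in [set: G]] = K%:E ->
  forall sigma : G -> G -> R[i], normalized_2cocycle sigma ->
    MCF sigma psi /\
    (forall f : G -> R[i], finsupp f ->
       (opnorm (pi_sigma sigma (fun g => (psi g * f g)%R))
          <= (C * K)%:E * opnorm (pi_sigma sigma f))%E).
Proof.
move=> hk _ hC hK sigma hsig; split.
  exact: (mcf R G kappa C psi K hk hC hK sigma hsig).
exact: (conj2 R G kappa C psi K hk hC hK sigma hsig).
Qed.
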